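(* Let $r\in\mathbb{N}$ be odd. For any $n\ge r$, $A>0$ and $\lambda\in[0,1]$, there exists $f\in C^r[-1,1]$, identically $0$ on $[-1,-1/2]$ and nonnegative on $[-1,1]$, such that every algebraic polynomial $P_n$ of degree $\le n$ which is nonnegative on $(\lambda-1/n,\lambda)$ and satisfies $P_n^{(i)}(\lambda)=f^{(i)}(\lambda)$ for $0\le i\le r$ obeys $$\|f-P_n\|>A\,\|f^{(r)}\|.$$
   Context: $\|\cdot\|$ is the sup norm on $[-1,1]$. *)

(* Defs.v *)
From Stdlib Require Import Reals.
From Coquelicot Require Import Coquelicot.
Open Scope R_scope.

(* Sup norm on [-1,1] (as an extended real; finite for continuous g). *)
Definition supnorm (g : R -> R) : Rbar :=
  Lub_Rbar (fun y => exists x, -1 <= x <= 1 /\ y = Rabs (g x)).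

(* f is r times continuously differentiable (on all of R). *)
Definition Cr_fun (r : nat) (f : R -> R) : Prop :=
  (forall k, (k < r)%nat -> forall x, ex_derive (Derive_n f k) x) /\
  (forall x, continuous (Derive_n f r) x).

Definition poly_eval (c : nat -> R) (n : nat) (x : R) : R :=
  sum_f_R0 (fun k => c k * x ^ k) n.

(* Main.v *)
Require Import Defs.
From Stdlib Require Import Reals Arith Lra Lia.
From Coquelicot Require Import Coquelicot.
Open Scope R_scope.

Definition mp (x : R) : R := (x + Rabs x) / 2.
Definition tp (k : nat) (x : R) : R := mp x ^ k.

Lemma mp_neg x : x <= 0 -> mp x = 0.
Proof. intros H. unfold mp. rewrite Rabs_left1; lra. Qed.
Lemma mp_pos x : 0 <= x -> mp x = x.
Proof. intros H. unfold mp. rewrite Rabs_pos_eq; lra. Qed.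
Lemma mp_ge0 x : 0 <= mp x.
Proof. unfold mp. destruct (Rle_dec 0 x). rewrite Rabs_pos_eq; lra. rewrite Rabs_left1; lra. Qed.
Lemma mp_abs x : Rabs (mp x) <= Rabs x.
Proof. destruct (Rle_dec 0 x). rewrite mp_pos; lra. rewrite mp_neg; try lra. rewrite Rabs_R0. apply Rabs_pos. Qed.
Lemma mp_mono x y : x <= y -> mp x <= mp y.
Proof. intros H. unfold mp. destruct (Rle_dec 0 x); destruct (Rle_dec 0 y);
 repeat (rewrite Rabs_pos_eq; [|lra]); repeat (rewrite Rabs_left1; [|lra]); try lra;
 try (rewrite Rabs_left1; lra); try (rewrite Rabs_pos_eq; lra). Qed.
Lemma mp_lip x y : x <= y -> mp y - mp x <= y - x.
Proof. intros H. unfold mp. destruct (Rle_dec 0 x); destruct (Rle_dec 0 y);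
 repeat (rewrite (Rabs_pos_eq x); [|lra]); repeat (rewrite (Rabs_left1 x); [|lra]);
 repeat (rewrite (Rabs_pos_eq y); [|lra]); repeat (rewrite (Rabs_left1 y); [|lra]); lra. Qed.

Lemma pow_le1 a n : 0 <= a <= 1 -> a ^ n <= 1.
Proof. intros H; induction n; simpl; [lra|]. assert (0 <= a ^ n) by (apply pow_le; lra). nra. Qed.

Lemma locally_of (x : R) (P : R -> Prop) (e : R) : 0 < e ->
  (forall y, Rabs (y - x) < e -> P y) -> locally x P.
Proof.
intros He H. exists (mkposreal e He). intros y Hy. apply H. exact Hy.
Qed.

Lemma tp_der (j : nat) (x : R) :
  is_derive (tp (S (S j))) x (INR (S (S j)) * tp (S j) x).
Proof.
destruct (Rtotal_order x 0) as [Hx|[Hx|Hx]].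
- assert (E : tp (S j) x = 0) by (unfold tp; rewrite mp_neg; [apply pow_i; lia|lra]).
  rewrite E, Rmult_0_r.
  apply is_derive_ext_loc with (f := fun _ => 0).
  + apply locally_of with (e := - x); [lra|]. intros y Hy.
    unfold tp. rewrite mp_neg. rewrite pow_i; [reflexivity|lia].
    apply Rabs_def2 in Hy. lra.
  + apply (is_derive_const 0).
- subst x. apply is_derive_Reals. intros eps Heps.
  assert (Hd : 0 < Rmin eps 1) by (apply Rmin_pos; lra).
  exists (mkposreal _ Hd). intros h Hh Hlt. simpl in Hlt.
  unfold tp. rewrite (mp_neg 0 (Rle_refl 0)). rewrite !pow_i; try lia.
  rewrite Rplus_0_l, Rmult_0_r, Rminus_0_r, Rminus_0_r.
  assert (Hh1 : Rabs h < eps) by (apply Rlt_le_trans with (1 := Hlt); apply Rmin_l).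
  assert (Hh2 : Rabs h < 1) by (apply Rlt_le_trans with (1 := Hlt); apply Rmin_r).
  unfold Rdiv. rewrite Rabs_mult, Rabs_inv, <- RPow_abs.
  assert (Ha : Rabs (mp h) <= Rabs h) by apply mp_abs.
  assert (H0 : 0 < Rabs h) by (apply Rabs_pos_lt; exact Hh).
  assert (Hp : Rabs (mp h) ^ S (S j) <= Rabs h ^ S (S j)) by (apply pow_incr; split; [apply Rabs_pos|exact Ha]).
  assert (Hq : Rabs h ^ S j <= 1) by (apply pow_le1; split; [apply Rabs_pos|lra]).
  apply Rle_lt_trans with (Rabs h ^ S (S j) * / Rabs h).
  + apply Rmult_le_compat_r; [left; apply Rinv_0_lt_compat; exact H0| exact Hp].
  + replace (Rabs h ^ S (S j) * / Rabs h) with (Rabs h * Rabs h ^ j) by (simpl; field; lra).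
    assert (Hq' : Rabs h ^ j <= 1) by (apply pow_le1; split; [apply Rabs_pos|lra]).
    assert (0 <= Rabs h ^ j) by (apply pow_le; apply Rabs_pos).
    nra.
- apply is_derive_ext_loc with (f := fun t => t ^ S (S j)).
  + apply locally_of with (e := x); [lra|]. intros y Hy.
    unfold tp. rewrite mp_pos. reflexivity. apply Rabs_def2 in Hy. lra.
  + unfold tp. rewrite (mp_pos x); [|lra].
    replace (INR (S (S j)) * x ^ S j) with (INR (S (S j)) * 1 * x ^ Init.Nat.pred (S (S j))) by (simpl; ring).
    apply (is_derive_pow (fun t => t)). apply (is_derive_id x).
Qed.

Lemma tpa_der (j : nat) (a x : R) :
  is_derive (fun y => tp (S (S j)) (y - a)) x (INR (S (S j)) * tp (S j) (x - a)).
Proof.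
assert (H := is_derive_comp (tp (S (S j))) (fun y => y - a) x _ 1 (tp_der j (x - a))).
unfold scal in H; simpl in H; unfold mult in H; simpl in H; rewrite Rmult_1_l in H. apply H.
auto_derive; [exact I| ring].
Qed.

Definition Fab (k : nat) (a b : R) (x : R) : R := tp k (x - a) - tp k (x - b).

Lemma Fab_der (m : nat) (C a b x : R) :
  is_derive (fun y => C * (tp (S (S m)) (y - a) - tp (S (S m)) (y - b))) x
    (C * (INR (S (S m)) * tp (S m) (x - a) - INR (S (S m)) * tp (S m) (x - b))).
Proof.
apply is_derive_scal.
assert (H := is_derive_minus _ _ x _ _ (tpa_der m a x) (tpa_der m b x)).
exact H.
Qed.

Lemma F_Dn (r : nat) (a b : R) : forall j m, (j + m = r)%nat -> forall x,
  Derive_n (Fab (S r) a b) j x =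
  INR (fact (S r)) / INR (fact (S m)) * (tp (S m) (x - a) - tp (S m) (x - b)).
Proof.
induction j as [|j IH]; intros m Hjm x.
- simpl in Hjm. subst m. simpl Derive_n. unfold Fab. field. apply INR_fact_neq_0.
- assert (IH' := IH (S m) ltac:(lia)).
  change (Derive_n (Fab (S r) a b) (S j) x) with (Derive (Derive_n (Fab (S r) a b) j) x). rewrite (Derive_ext _ _ x IH').
  rewrite (is_derive_unique _ _ _ (Fab_der m _ a b x)).
  change (fact (S (S m))) with (S (S m) * fact (S m))%nat.
  rewrite mult_INR. field. split; [apply INR_fact_neq_0| apply not_0_INR; lia].
Qed.

Lemma mp_cont (y : R) : continuous mp y.
Proof.
assert (H1 : continuous (fun t => t + Rabs t) y).
{ apply (continuous_plus (fun t => t) Rabs). apply continuous_id. apply continuous_Rabs. }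
exact (continuous_mult (fun t => t + Rabs t) (fun _ => / 2) y H1 (continuous_const _ y)).
Qed.

Lemma tp1_cont (a y : R) : continuous (fun t => tp 1 (t - a)) y.
Proof.
apply continuous_ext with (f := fun t => mp (t - a)).
{ intros t. unfold tp. simpl. ring. }
apply (continuous_comp (fun t => t - a) mp).
- apply (continuous_minus (fun t => t) (fun _ => a)). apply continuous_id. apply continuous_const.
- apply mp_cont.
Qed.

Lemma F_Cr (r : nat) (a b : R) : Cr_fun r (Fab (S r) a b).
Proof.
split.
- intros k Hk x.
  destruct (r - k)%nat as [|m'] eqn:Em; [lia|].
  apply ex_derive_ext with (f := fun y => INR (fact (S r)) / INR (fact (S (S m'))) *
      (tp (S (S m')) (y - a) - tp (S (S m')) (y - b))).
  { intros t. symmetry. apply F_Dn. lia. }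
  eexists. apply Fab_der.
- intros x.
  apply continuous_ext with (f := fun y => INR (fact (S r)) / INR (fact 1) *
      (tp 1 (y - a) - tp 1 (y - b))).
  { intros t. symmetry. apply F_Dn. lia. }
  apply (continuous_mult (fun _ => INR (fact (S r)) / INR (fact 1)) (fun y => tp 1 (y - a) - tp 1 (y - b))).
  apply continuous_const.
  apply (continuous_minus (fun y => tp 1 (y - a)) (fun y => tp 1 (y - b))); apply tp1_cont.
Qed.

Lemma pe_sumn (c : nat -> R) (n : nat) (x : R) :
  poly_eval c n x = sum_n (fun j => c j * x ^ j) n.
Proof. unfold poly_eval. rewrite sum_n_Reals. reflexivity. Qed.

Lemma pe_exd (c : nat -> R) (n k : nat) (x : R) : ex_derive_n (poly_eval c n) k x.
Proof.
apply ex_derive_n_ext with (f := fun y => sum_n (fun j => c j * y ^ j) n).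
{ intros t. symmetry. apply pe_sumn. }
apply (ex_derive_n_sum_n n (fun j y => c j * y ^ j)).
apply filter_forall. intros t l j _ _. apply ex_derive_n_scal_l, ex_derive_n_pow.
Qed.

Lemma pe_Dn (c : nat -> R) (n k : nat) (x : R) :
  Derive_n (poly_eval c n) k x = sum_f_R0 (fun j => c j * Derive_n (fun y => y ^ j) k x) n.
Proof.
rewrite (Derive_n_ext _ (fun y => sum_n (fun j => c j * y ^ j) n)).
2:{ intros t. apply pe_sumn. }
rewrite (Derive_n_sum_n n (fun j y => c j * y ^ j)).
2:{ apply filter_forall. intros t l j _ _. apply ex_derive_n_scal_l, ex_derive_n_pow. }
rewrite sum_n_Reals. apply sum_eq. intros i _. apply Derive_n_scal_l.
Qed.

Lemma fact_ge1 (m : nat) : 1 <= INR (fact m).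
Proof. change 1 with (INR 1). apply le_INR. assert (H := lt_O_fact m). lia. Qed.

Lemma pe_Dn_bound (c : nat -> R) (n k : nat) (x : R) : -1 <= x <= 1 ->
  Rabs (Derive_n (poly_eval c n) k x) <= sum_f_R0 (fun j => Rabs (c j) * INR (fact j)) n.
Proof.
intros Hx. rewrite pe_Dn.
eapply Rle_trans; [apply sum_f_R0_triangle|]. apply sum_Rle. intros j _.
rewrite Rabs_mult. apply Rmult_le_compat_l; [apply Rabs_pos|].
rewrite Derive_n_pow. destruct (le_dec k j).
- assert (HB := fact_ge1 (j - k)). assert (HA := fact_ge1 j).
  rewrite Rabs_mult. unfold Rdiv. rewrite Rabs_mult, Rabs_inv, !Rabs_pos_eq by lra.
  rewrite <- RPow_abs.
  assert (Hp : Rabs x ^ (j - k) <= 1) by (apply pow_le1; split; [apply Rabs_pos| apply Rabs_le; lra]).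
  assert (Hp0 : 0 <= Rabs x ^ (j - k)) by (apply pow_le, Rabs_pos).
  assert (Hi : / INR (fact (j - k)) <= 1).
  { rewrite <- Rinv_1. apply Rinv_le_contravar; lra. }
  assert (Hi0 : 0 < / INR (fact (j - k))) by (apply Rinv_0_lt_compat; lra).
  apply Rle_trans with (INR (fact j) * / INR (fact (j - k)) * 1).
  + apply Rmult_le_compat_l; [|exact Hp]. apply Rmult_le_pos; lra.
  + rewrite Rmult_1_r. rewrite <- (Rmult_1_r (INR (fact j))) at 2. apply Rmult_le_compat_l; lra.
- rewrite Rabs_R0. assert (HA := fact_ge1 j). lra.
Qed.

Lemma odd_even_pow (r : nat) (x : R) : Nat.Odd r -> (- x) ^ (S r) = x ^ (S r).
Proof.
intros [p Hp]. replace (S r) with (2 * S p)%nat by lia.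
replace (- x) with (-1 * x) by ring. rewrite Rpow_mult_distr, pow_1_even. ring.
Qed.

Lemma odd_m1 (r : nat) : Nat.Odd r -> (-1) ^ (S r) = 1.
Proof. intros [p Hp]. replace (S r) with (2 * S p)%nat by lia. apply pow_1_even. Qed.

Lemma binsum (r : nat) (d : R) : Nat.Odd r ->
  sum_f_R0 (fun m => d ^ m / INR (fact m) *
     ((-1) ^ m * (INR (fact (S r)) / INR (fact (S (r - m))) * d ^ (S (r - m))))) r
  = - d ^ (S r).
Proof.
intros Hodd.
assert (H := binomial (- d) d (S r)).
replace (- d + d) with 0 in H by ring. rewrite pow_i in H by lia.
rewrite tech5 in H.
replace (S r - S r)%nat with 0%nat in H by lia.
unfold Binomial.C in H. replace (S r - S r)%nat with 0%nat in H by lia.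
rewrite (odd_even_pow r d Hodd) in H.
assert (E : sum_f_R0 (fun i => INR (fact (S r)) / (INR (fact i) * INR (fact (S r - i))) * (- d) ^ i * d ^ (S r - i)) r
  = sum_f_R0 (fun m => d ^ m / INR (fact m) *
     ((-1) ^ m * (INR (fact (S r)) / INR (fact (S (r - m))) * d ^ (S (r - m))))) r).
{ apply sum_eq. intros i Hi. replace (S r - i)%nat with (S (r - i)) by lia.
  replace (- d) with (-1 * d) by ring. rewrite Rpow_mult_distr. field.
  split; apply INR_fact_neq_0. }
rewrite <- E. simpl (fact 0) in H. simpl (pow d 0) in H.
assert (Hf : INR (fact (S r)) / (INR (fact (S r)) * INR 1) = 1).
{ simpl (INR 1). field. apply INR_fact_neq_0. }
rewrite Hf in H. lra.
Qed.

Lemma powdiff (m : nat) (u v : R) : 0 <= v -> v <= u -> u <= 3 ->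
  u ^ (S m) - v ^ (S m) <= INR (S m) * 3 ^ m * (u - v).
Proof.
intros Hv Hvu Hu. induction m as [|m IH].
- simpl. lra.
- assert (Hvp : v ^ (S m) <= 3 ^ (S m)) by (apply pow_incr; lra).
  assert (H3 : 0 <= 3 ^ m) by (apply pow_le; lra).
  assert (Hd : 0 <= u ^ (S m) - v ^ (S m)) by (assert (v ^ S m <= u ^ S m) by (apply pow_incr; lra); lra).
  replace (u ^ S (S m) - v ^ S (S m)) with (u * (u ^ S m - v ^ S m) + v ^ S m * (u - v)) by (simpl; ring).
  rewrite (S_INR (S m)).
  replace ((INR (S m) + 1) * 3 ^ S m * (u - v)) with (3 * (INR (S m) * 3 ^ m * (u - v)) + 3 ^ S m * (u - v)) by (simpl; ring).
  assert (Huv : 0 <= u - v) by lra.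
  apply Rplus_le_compat.
  + apply Rle_trans with (3 * (u ^ S m - v ^ S m)). apply Rmult_le_compat_r; lra.
    apply Rmult_le_compat_l; lra.
  + apply Rmult_le_compat_r; lra.
Qed.

Lemma supnorm_ge (g : R -> R) (x : R) : -1 <= x <= 1 -> Rbar_le (Rabs (g x)) (supnorm g).
Proof.
intros Hx. unfold supnorm. destruct (Lub_Rbar_correct (fun y => exists x, -1 <= x <= 1 /\ y = Rabs (g x))) as [Hub _].
apply Hub. exists x. split; auto.
Qed.

Lemma supnorm_le (g : R -> R) (V : R) : (forall x, -1 <= x <= 1 -> Rabs (g x) <= V) ->
  exists v, supnorm g = Finite v /\ v <= V.
Proof.
intros H.
assert (H0 := supnorm_ge g 0 ltac:(lra)).
assert (H1 : Rbar_le (supnorm g) V).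
{ unfold supnorm. destruct (Lub_Rbar_correct (fun y => exists x, -1 <= x <= 1 /\ y = Rabs (g x))) as [_ Hl].
  apply Hl. intros y [x [Hx ->]]. simpl. apply H. exact Hx. }
destruct (supnorm g) as [v| |]; simpl in H0, H1; try contradiction.
exists v. split; auto.
Qed.

Module MC.
From HB Require Import structures.
From mathcomp Require Import all_boot all_algebra.
From mathcomp Require Import Rstruct.

Import mathcomp.order.order.Order.TTheory GRing.Theory Num.Theory.
Local Open Scope ring_scope.

Lemma expr_pow (x : R) (i : nat) : (x ^+ i)%R = pow x i.
Proof. elim: i => [|i IH] //=. by rewrite exprS IH. Qed.

Lemma pe_big (c : nat -> R) (n : nat) (x : R) :
  poly_eval c n x = \sum_(i < n.+1) c i * x ^+ i.
Proof.
rewrite /poly_eval. elim: n => [|n IH].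
  by rewrite big_ord_recr big_ord0 /= add0r expr_pow.
by rewrite big_ord_recr /= -IH expr_pow.
Qed.

Definition xs (j : nat) : R := 1 / INR j.+1.

Lemma xs_inj : injective xs.
Proof.
move=> i j; rewrite /xs => H.
have Hi : Rlt 0 (INR i.+1) by apply lt_0_INR; lia.
have Hj : Rlt 0 (INR j.+1) by apply lt_0_INR; lia.
have : INR i.+1 = INR j.+1.
  have := H. move=> H'. 
  apply (f_equal Rinv) in H'. rewrite /Rdiv !Rmult_1_l !Rinv_inv in H'. exact H'.
by move/INR_eq => [].
Qed.

Lemma xs_in (j : nat) : (Rle (-1) (xs j) /\ Rle (xs j) 1).
Proof.
rewrite /xs. have Hj : Rle 1 (INR j.+1).
  by rewrite S_INR; have := pos_INR j; lra.
split.
  apply Rle_trans with R0; [lra|]. apply Rlt_le, Rdiv_lt_0_compat; lra.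
apply (Rmult_le_reg_r (INR j.+1)); [lra|].
rewrite /Rdiv Rmult_assoc Rinv_l; lra.
Qed.

Lemma coef_bound (n : nat) : exists Kf : nat -> R,
  forall (c : nat -> R) (M : R),
    (forall x, Rle (-1) x /\ Rle x 1 -> Rle (Rabs (poly_eval c n x)) M) ->
    forall k, le k n -> Rle (Rabs (c k)) (Rmult (Kf k) M).
Proof.
have n_gt0 : leq 1 n.+1 by [].
pose L := tnth (@lagrange R n.+1 xs).
exists (fun k => \sum_(i < n.+1) `|(L i : {poly R})`_k|).
move=> c M HM k /ssrnat.leP Hk.
pose p : {poly R} := \poly_(i < n.+1) c i.
have sp : leq (size p) n.+1 by apply: size_poly.
have Hg := @lagrange_gen R n.+1 xs n_gt0 xs_inj p sp.
have Hck : c k = p`_k by rewrite coef_poly ltnS Hk.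
have Hev : forall i, p.[xs i] = poly_eval c n (xs i).
  by move=> i; rewrite pe_big horner_poly.
rewrite Hck Hg coef_sum.
apply/RleP.
have nE : forall y : R, Rabs y = `|y| by [].
have mE : forall a b : R, Rmult a b = a * b by [].
rewrite nE mE.
apply: le_trans (ler_norm_sum _ _ _) _.
rewrite mulr_suml; apply: ler_sum => i _.
rewrite coefCM normrM mulrC; apply: ler_wpM2l; first by apply: normr_ge0.
rewrite Hev; apply/RleP; exact: HM (xs_in i).
Qed.

End MC.

Lemma markov_weak (n k : nat) : exists B, forall (c : nat -> R) (M : R),
  (forall x, -1 <= x <= 1 -> Rabs (poly_eval c n x) <= M) ->
  forall xi, -1 <= xi <= 1 -> Rabs (Derive_n (poly_eval c n) k xi) <= B * M.
Proof.
destruct (MC.coef_bound n) as [Kf HK].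
exists (sum_f_R0 (fun j => Kf j * INR (fact j)) n).
intros c M HM xi Hxi.
eapply Rle_trans; [apply pe_Dn_bound; exact Hxi|].
rewrite Rmult_comm, scal_sum. apply sum_Rle. intros j Hj.
assert (H := HK c M HM j Hj). assert (Hf := fact_ge1 j).
replace (Kf j * INR (fact j) * M) with (Kf j * M * INR (fact j)) by ring.
apply Rmult_le_compat_r; lra.
Qed.

Theorem lemma3p9 (r n : nat) (A lam : R) :
  Nat.Odd r -> (r <= n)%nat -> 0 < A -> 0 <= lam <= 1 ->
  exists f : R -> R,
    Cr_fun r f /\
    (forall x, -1 <= x <= -1/2 -> f x = 0) /\
    (forall x, -1 <= x <= 1 -> 0 <= f x) /\
    (forall c : nat -> R,
        (forall x, lam - 1 / INR n < x < lam -> 0 <= poly_eval c n x) ->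
        (forall i, (i <= r)%nat ->
           Derive_n (poly_eval c n) i lam = Derive_n f i lam) ->
        Rbar_lt (Rbar_mult A (supnorm (Derive_n f r)))
                (supnorm (fun x => f x - poly_eval c n x))).
Proof.
intros Hodd Hrn HA Hlam.
assert (Hr1 : (1 <= r)%nat) by (destruct Hodd as [p Hp]; lia).
assert (Hn : 1 <= INR n) by (change 1 with (INR 1); apply le_INR; lia).
destruct (markov_weak n (S r)) as [B HB].
set (C1 := INR (S r) * 3 ^ r * 2).
set (C2 := INR (fact (S r)) * 2).
assert (HC1 : 0 < C1).
{ unfold C1. assert (0 < INR (S r)) by (apply lt_0_INR; lia).
  assert (0 < 3 ^ r) by (apply pow_lt; lra). nra. }
assert (HC2 : 0 < C2) by (unfold C2; assert (H := fact_ge1 (S r)); lra).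
set (D0 := (Rabs B + 1) * (A * C2 + C1)).
assert (HD0 : 0 < D0).
{ unfold D0. assert (H := Rabs_pos B). assert (0 < A * C2) by nra. nra. }
set (Den := 2 + 2 * INR n + D0).
assert (HDen : 0 < Den) by (unfold Den; lra).
set (d := 1 / Den).
assert (Hd0 : 0 < d) by (unfold d; apply Rdiv_lt_0_compat; lra).
assert (HdDen : d * Den = 1) by (unfold d; field; lra).
assert (Hd2 : d * 2 <= 1) by (unfold Den in HdDen; nra).
assert (Hdn : d * INR n < 1) by (unfold Den in HdDen; nra).
assert (HdD0 : d * D0 < 1) by (unfold Den in HdDen; nra).
assert (Hdn' : d < 1 / INR n).
{ apply (Rmult_lt_reg_r (INR n)); [lra|]. unfold Rdiv. rewrite Rmult_assoc, Rinv_l; lra. }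
set (a := lam - d). set (b := lam + d).
exists (Fab (S r) a b).
split; [apply F_Cr|].
split.
{ intros x Hx. unfold Fab, tp. rewrite (mp_neg (x - a)), (mp_neg (x - b)).
  rewrite (pow_i (S r)); [ring|lia]. unfold b; lra. unfold a; lra. }
split.
{ intros x Hx. unfold Fab, tp.
  assert (H1 := mp_ge0 (x - b)). assert (H2 : mp (x - b) <= mp (x - a)) by (apply mp_mono; unfold a, b; lra).
  assert (mp (x - b) ^ S r <= mp (x - a) ^ S r) by (apply pow_incr; lra). lra. }
intros c Hpos Hjet.
assert (Hjet' : forall i, (i <= r)%nat -> Derive_n (poly_eval c n) i lam =
   INR (fact (S r)) / INR (fact (S (r - i))) * d ^ S (r - i)).
{ intros i Hi. rewrite (Hjet i Hi). rewrite (F_Dn r a b i (r - i)); [|lia].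
  unfold tp. replace (lam - a) with d by (unfold a; ring). replace (lam - b) with (- d) by (unfold b; ring).
  rewrite (mp_pos d), (mp_neg (- d)); try lra. rewrite (pow_i (S (r - i))); [ring|lia]. }
set (q := fun y => poly_eval c n (- y)).
assert (Hloc : forall z, locally (- z) (fun y : R_UniformSpace => forall k : nat, (k <= S r)%nat -> ex_derive_n (poly_eval c n) k y)).
{ intros z. apply filter_forall. intros y k _. apply pe_exd. }
assert (Hloc' : forall z m, locally (- z) (fun y : R_UniformSpace => forall k : nat, (k <= m)%nat -> ex_derive_n (poly_eval c n) k y)).
{ intros z m. apply filter_forall. intros y k _. apply pe_exd. }
destruct (Taylor_Lagrange q r (- lam) (- lam + d)) as [z [Hz Heq]]; [lra| |].
{ intros t _ k _. unfold q. apply ex_derive_n_comp_opp. apply Hloc'. }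
replace (- lam + d - - lam) with d in Heq by ring.
unfold q in Heq at 1.
replace (- (- lam + d)) with (lam - d) in Heq by ring.
assert (Hsum : sum_f_R0 (fun m => d ^ m / INR (fact m) * Derive_n q m (- lam)) r = - d ^ S r).
{ rewrite <- (binsum r d Hodd). apply sum_eq. intros i Hi. f_equal.
  unfold q. rewrite Derive_n_comp_opp by apply Hloc'. rewrite Ropp_involutive.
  rewrite (Hjet' i Hi). reflexivity. }
rewrite Hsum in Heq.
unfold q in Heq. rewrite Derive_n_comp_opp in Heq by apply Hloc'.
rewrite (odd_m1 r Hodd), Rmult_1_l in Heq.
set (Dv := Derive_n (poly_eval c n) (S r) (- z)) in Heq.
assert (HP0 : 0 <= poly_eval c n (lam - d)) by (apply Hpos; lra).
assert (Hp : 0 < d ^ S r) by (apply pow_lt; lra).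
assert (Hf1 := fact_ge1 (S r)).
assert (HDv : 1 <= Dv).
{ set (t := Dv / INR (fact (S r))).
  assert (Ht : 1 <= t).
  { assert (E : d ^ S r / INR (fact (S r)) * Dv = d ^ S r * t) by (unfold t; field; lra).
    rewrite E in Heq. nra. }
  assert (E2 : Dv = t * INR (fact (S r))) by (unfold t; field; lra). nra. }
assert (HDr : forall x, -1 <= x <= 1 -> Rabs (Derive_n (Fab (S r) a b) r x) <= C2 * d).
{ intros x Hx. rewrite (F_Dn r a b r 0); [|lia].
  unfold tp. simpl pow. simpl (fact 1). simpl (INR 1).
  assert (H1 := mp_mono (x - b) (x - a) ltac:(unfold a, b; lra)).
  assert (H2 := mp_lip (x - b) (x - a) ltac:(unfold a, b; lra)).
  rewrite Rabs_pos_eq.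
  - unfold C2. replace (x - a - (x - b)) with (2 * d) in H2 by (unfold a, b; ring).
    assert (H3 : mp (x - a) * 1 - mp (x - b) * 1 <= 2 * d) by lra.
    replace (INR (fact (S r)) / 1 * (mp (x - a) * 1 - mp (x - b) * 1)) with (INR (fact (S r)) * (mp (x - a) * 1 - mp (x - b) * 1)) by field.
    nra.
  - apply Rmult_le_pos. apply Rmult_le_pos; lra. lra. }
destruct (supnorm_le _ _ HDr) as [v [Hv Hvle]].
rewrite Hv. simpl Rbar_mult.
assert (HF : forall x, -1 <= x <= 1 -> Rabs (Fab (S r) a b x) <= C1 * d).
{ intros x Hx. unfold Fab, tp.
  assert (H1 := mp_ge0 (x - b)). assert (H2 : mp (x - b) <= mp (x - a)) by (apply mp_mono; unfold a, b; lra).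
  assert (H3 : mp (x - a) <= 3).
  { rewrite <- (mp_pos 3) by lra. apply mp_mono. unfold a. lra. }
  assert (H4 := mp_lip (x - b) (x - a) ltac:(unfold a, b; lra)).
  replace (x - a - (x - b)) with (2 * d) in H4 by (unfold a, b; ring).
  assert (H5 := powdiff r (mp (x - a)) (mp (x - b)) H1 H2 H3).
  assert (mp (x - b) ^ S r <= mp (x - a) ^ S r) by (apply pow_incr; lra).
  rewrite Rabs_pos_eq by lra.
  assert (0 < INR (S r) * 3 ^ r) by (apply Rmult_lt_0_compat; [apply lt_0_INR; lia| apply pow_lt; lra]).
  unfold C1. nra. }
destruct (supnorm (fun x => Fab (S r) a b x - poly_eval c n x)) as [w| |] eqn:Ew; simpl.
- destruct (Rlt_le_dec (A * v) w) as [Hlt|Hge]; [exact Hlt|exfalso].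
  assert (Hw : forall x, -1 <= x <= 1 -> Rabs (Fab (S r) a b x - poly_eval c n x) <= w).
  { intros x Hx. assert (H := supnorm_ge (fun x => Fab (S r) a b x - poly_eval c n x) x Hx).
    rewrite Ew in H. exact H. }
  set (M := (A * C2 + C1) * d).
  assert (HM : forall x, -1 <= x <= 1 -> Rabs (poly_eval c n x) <= M).
  { intros x Hx. assert (H1 := Hw x Hx). assert (H2 := HF x Hx).
    assert (H3 : Rabs (poly_eval c n x) <= Rabs (Fab (S r) a b x - poly_eval c n x) + Rabs (Fab (S r) a b x)).
    { replace (poly_eval c n x) with (- (Fab (S r) a b x - poly_eval c n x) + Fab (S r) a b x) at 1 by ring.
      eapply Rle_trans; [apply Rabs_triang|]. rewrite Rabs_Ropp. lra. }
    assert (A * v <= A * (C2 * d)) by (apply Rmult_le_compat_l; lra).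
    unfold M. nra. }
  assert (Hz' : -1 <= - z <= 1) by lra.
  assert (HBd := HB c M HM (- z) Hz'). fold Dv in HBd.
  assert (HM0 : 0 <= M) by (unfold M; assert (0 < A * C2) by nra; nra).
  assert (B * M <= Rabs B * M) by (apply Rmult_le_compat_r; [lra| apply RRle_abs]).
  assert (Rabs B * M < D0 * d).
  { unfold D0, M. assert (0 < (A * C2 + C1) * d) by (assert (0 < A * C2) by nra; nra). nra. }
  assert (Dv <= Rabs Dv) by apply RRle_abs.
  lra.
- exact I.
- assert (H := supnorm_ge (fun x => Fab (S r) a b x - poly_eval c n x) 0 ltac:(lra)).
  rewrite Ew in H. simpl in H. exact H.
Qed.
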